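(* Let $q$ be a prime power and $n=q^4-1$. (i) If $0\le a_2<q-1$, $0\le a_3<q$ and $a_2+a_3\ge q-1$, then the interlude $[(a_2,a_3,a_2,a_3),(a_2+1,a_3,a_2+1,a_3)]_M$ contains exactly $q^2-qa_3-a_2-1$ minimal representatives of SR-asymmetric cosets of cardinality $2$. (ii) If $0\le a_3\le q-2$, then the interlude $[(q-1,a_3,q-1,a_3),(0,a_3+1,0,a_3+1)]_M$ contains exactly $q^2-qa_3-(q-1)-1$ minimal representatives of SR-asymmetric cosets of cardinality $2$. Moreover, in both cases every cyclotomic coset generated by an element of the interlude is an SR-asymmetric coset.
   Context: Identify $\mathbb{Z}_n$ with $\{0,\ldots,n-1\}$, all arithmetic modulo $n$. The $q$-adic 4-tuple $(a_0,a_1,a_2,a_3)$ denotes $a_0+a_1q+a_2q^2+a_3q^3$ with $0\le a_i<q$. The cyclotomic coset of $x$ with respect to $q^2$ is $I_x=\{x,\,q^2x\bmod n\}$; its minimal representative is its least element. The (Hermitian) reciprocal coset of $I_x$ is $I_{n-qx}$. $I_x$ is symmetric if $I_{n-qx}=I_x$ and asymmetric otherwise; for an asymmetric pair with minimal representatives $x<y$, $I_x$ is FR-asymmetric and $I_y$ is SR-asymmetric. For $0\le a<q-1$, $0\le b<q$, the interlude $[(a,b,a,b),(a+1,b,a+1,b)]_M$ is the set of integers $x$ with $(a,b,a,b)<x<(a+1,b,a+1,b)$ that are minimal representatives of a coset of cardinality $2$; for $0\le b\le q-2$, $[(q-1,b,q-1,b),(0,b+1,0,b+1)]_M$ is the set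 of integers $x$ with $(q-1,b,q-1,b)<x<(0,b+1,0,b+1)$ and $x<q^2x\bmod n$. *)

(* Defs.v *)
From mathcomp Require Import all_boot all_order all_algebra.
Set Implicit Arguments. Unset Strict Implicit. Unset Printing Implicit Defensive.

(* Z_n identified with {0,...,n-1}; elements handled as nat, reduced mod n. *)

Definition prime_power (q : nat) : Prop :=
  exists p k : nat, prime p /\ 0 < k /\ q = p ^ k.

Definition nq (q : nat) : nat := q ^ 4 - 1.

Definition qad (q a0 a1 a2 a3 : nat) : nat :=
  a0 + a1 * q + a2 * q ^ 2 + a3 * q ^ 3.

Definition coset (q x : nat) : seq nat :=
  [:: x %% nq q; (q ^ 2 * x) %% nq q].

Definition card2 (q x : nat) : bool := x %% nq q != (q ^ 2 * x) %% nq q.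

Definition minrep (q x : nat) : nat := minn (x %% nq q) ((q ^ 2 * x) %% nq q).

Definition coset_eq (q x y : nat) : bool :=
  all (fun z => z \in coset q y) (coset q x) &&
  all (fun z => z \in coset q x) (coset q y).

(* generator of the reciprocal coset I_{n - q x} *)
Definition recip (q x : nat) : nat := (nq q - (q * x) %% nq q) %% nq q.

Definition symmetric_coset (q x : nat) : bool := coset_eq q (recip q x) x.

Definition SR_asym (q x : nat) : bool :=
  ~~ symmetric_coset q x && (minrep q (recip q x) < minrep q x).

Definition interlude1 (q a b x : nat) : bool :=
  [&& qad q a b a b < x, x < qad q a.+1 b a.+1 b,
      x == minrep q x & card2 q x].

Definition interlude2 (q b x : nat) : bool :=
  [&& qad q (q - 1) b (q - 1) b < x, x < qad q 0 b.+1 0 b.+1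
    & x < (q ^ 2 * x) %% nq q].

(* Main.v *)
Require Import Defs.
From mathcomp Require Import all_boot all_order all_algebra.
From mathcomp Require Import zify ring.

Lemma lexB B u v c d : u < B -> c < B ->
  (u + v*B < c + d*B) = (v < d) || ((v == d) && (u < c)).
Proof.
move=> uB cB; case: (ltngtP v d) => [vd|vd|->] /=.
- apply/idP; nia.
- apply/negbTE; nia.
- lia.
Qed.

Lemma lexBe B u v c d : u < B -> c < B ->
  (u + v*B == c + d*B) = (v == d) && (u == c).
Proof.
move=> uB cB; case: (ltngtP v d) => [vd|vd|->] /=.
- apply/negbTE; nia.
- apply/negbTE; nia.
- lia.
Qed.

Lemma swapB B x : 0 < B -> x < B*B - 1 ->
  (B*x) %% (B*B-1) = x %/ B + (x %% B) * B.
Proof.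
move=> B0 xn.
set u := x %% B; set v := x %/ B.
have ux : x = u + v * B by rewrite addnC -divn_eq.
have uB : u < B by rewrite ltn_mod.
have vB : v < B by rewrite ltn_divLR //; lia.
have -> : B * x = v * (B*B-1) + (v + u * B).
  rewrite ux. have BB: 1 <= B*B by nia. nia.
rewrite modnMDl modn_small //.
nia.
Qed.

Lemma nqE q : nq q = q^2 * q^2 - 1.
Proof. by rewrite /nq -expnD. Qed.

Lemma halfchar Q w x : 1 < Q -> w.+1 < Q -> x < Q*Q - 1 ->
  x = x %% Q + x %/ Q * Q /\ x %% Q < Q /\ x %/ Q < Q /\
  (Q*x) %% (Q*Q-1) = x %/ Q + x %% Q * Q.
Proof.
move=> Q1 wQ xn; set u := x %% Q; set v := x %/ Q.
have ux : x = u + v * Q by rewrite addnC -divn_eq.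
have uB : u < Q by rewrite ltn_mod; lia.
have vB : v < Q by rewrite ltn_divLR //; lia.
split; first by []. split; first by []. split; first by [].
by rewrite swapB //; lia.
Qed.

Lemma core Q w u v : 1 < Q -> u < Q -> v < Q -> w.+1 < Q ->
  u + v*Q < w.+1 + w.+1*Q ->
  [&& w + w*Q < u+v*Q, u+v*Q == minn (u+v*Q) (v+u*Q) & u+v*Q != v+u*Q]
  = (w*Q + w < u+v*Q < w*Q+Q).
Proof.
move=> Q1 uQ vQ wQ hx.
have wQ' : w < Q by lia.
have A := lexB Q w w u v wQ' uQ.
move: hx; rewrite lexB // => hx.
have B : (u + v*Q < w*Q + Q) = (v <= w).
  rewrite (_ : w*Q+Q = 0 + w.+1*Q); last lia.
  rewrite lexB //; last lia. lia.
have C : (u+v*Q <= v+u*Q) = (v <= u) by rewrite leqNgt lexB //; lia.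
have D : (u+v*Q == v+u*Q) = (v==u)&&(u==v) by rewrite lexBe.
have E : forall x y, (x == minn x y) = (x <= y) by move=> x y; rewrite /minn; case: ltnP; lia.
rewrite E C D [w*Q + w]addnC A B. lia.
Qed.

Lemma I1char q a b x : 1 < q -> a.+1 < q -> b < q ->
  interlude1 q a b x =
  ((a + b*q) * q^2 + (a + b*q) < x) && (x < (a + b*q) * q^2 + q^2).
Proof.
move=> q1 aq bq.
rewrite /interlude1 /minrep /Defs.card2 nqE.
have Q1 : 1 < q^2 by rewrite expnS expn1; nia.
set Q := q^2.
have e1 : qad q a b a b = (a + b*q) + (a+b*q) * Q.
  rewrite /qad /Q !expnS expn0 !muln1; nia.
have e2 : qad q a.+1 b a.+1 b = (a.+1 + b*q) + (a.+1+b*q) * Q.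
  rewrite /qad /Q !expnS expn0 !muln1; nia.
rewrite e1 e2.
set w := a + b*q.
have wQ : w.+1 < Q by rewrite /w /Q expnS expn1; nia.
have w1 : a.+1 + b*q = w.+1 by rewrite /w; lia.
rewrite w1.
case: (boolP (x < w.+1 + w.+1 * Q)) => xlt; last first.
  rewrite andbF /=; apply/esym/negbTE; nia.
have xn : x < Q*Q - 1 by nia.
rewrite (modn_small xn).
have [ux [uQ [vQ ->]]] := halfchar Q w x Q1 wQ xn.
move: (x %% Q) (x %/ Q) ux uQ vQ xlt => u v -> uQ vQ xlt.
idtac.
rewrite andTb. by apply: core.
Qed.

Lemma swapUV B u v : 0 < B -> u < B -> v < B -> u + v*B < B*B - 1 ->
  (B*(u + v*B)) %% (B*B-1) = v + u * B.
Proof.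
move=> B0 uB vB xn.
have -> : B * (u + v*B) = v * (B*B-1) + (v + u * B).
  have BB: 1 <= B*B by nia. nia.
rewrite modnMDl modn_small //.
nia.
Qed.

Lemma coset_min q y x : coset_eq q y x -> minrep q x <= minrep q y.
Proof.
case/andP=> /allP H _.
have H1 := H (y %% nq q) (mem_head _ _).
have H2 : (q ^ 2 * y) %% nq q \in coset q x.
  by apply: H; rewrite /coset !inE eqxx orbT.
move: H1 H2; rewrite /minrep !inE.
move: (y %% nq q) ((q ^ 2 * y) %% nq q) (x %% nq q) ((q ^ 2 * x) %% nq q).
move=> a b c d; lia.
Qed.

Lemma SR_of_min q x : minrep q (recip q x) < minrep q x -> SR_asym q x.
Proof.
move=> h; rewrite /SR_asym h andbT /symmetric_coset.
apply/negP => /coset_min; lia.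
Qed.

Lemma digB B u v : u < B -> v < B -> u + v*B < B*B.
Proof. move=> *; nia. Qed.

Lemma topE B : 0 < B -> (B-1) + (B-1)*B = B*B-1.
Proof. by case: B => // B _; rewrite !mulSn !mulnS; lia. Qed.

Lemma lt_top B u v : u < B -> v < B -> (u + v*B < B*B-1) = (v < B-1) || (u < B-1).
Proof.
move=> uB vB; rewrite (_ : B*B-1 = (B-1) + (B-1)*B); last first.
  case: B uB vB => // B _ _; rewrite !mulSn !mulnS; lia.
rewrite lexB //; lia.
Qed.

Lemma fin_arith q a b u0 u1 : 1 < q -> a < q -> b < q -> u0 < q -> u1 < q ->
  q - 1 <= a + b -> (b < u1) || (b == u1) && (a < u0) ->
  ((q-1-a) < b) || ((q-1-a)==b) && (q-1-u1 < a) ||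
  (((q-1-u0) < b) || ((q-1-u0)==b) && (q-1-b < a)).
Proof. move=> *; lia. Qed.

Lemma qx_id q Q a b u0 u1 x r : Q = q*q -> x = (u0 + u1*q) + (a+b*q)*Q ->
  r = b + u0*q + (u1 + a*q)*Q -> q * x + b = b*Q*Q + r.
Proof. by move=> -> -> ->; ring. Qed.

Lemma re_id q Q a b u0 u1 : Q = q*q ->
  (q-1-b) + (q-1-u0)*q + ((q-1-u1) + (q-1-a)*q)*Q + (b + u0*q + (u1 + a*q)*Q)
  = ((q-1-b)+b) + ((q-1-u0)+u0)*q + (((q-1-u1)+u1) + ((q-1-a)+a)*q)*Q.
Proof. move=> _; ring. Qed.

Lemma SRlem q a b x : 1 < q -> a < q -> b < q -> q - 1 <= a + b ->
  (a+b*q)*q^2 + (a+b*q) < x -> x < (a+b*q)*q^2 + q^2 -> SR_asym q x.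
Proof.
move=> q1 aq bq ab h1 h2; apply: SR_of_min.
have Qe : q^2 = q*q by rewrite expnS expn1.
rewrite /minrep /recip nqE.
move: h1 h2; rewrite Qe.
have [Q eQ] : exists Q, Q = q*q by eexists.
rewrite -eQ => h1 h2.
have Q1 : 1 < Q by rewrite eQ; clear -q1; nia.
have Q0 : 0 < Q by clear -Q1; lia.
have [w ew] : exists w, w = a + b*q by eexists.
rewrite -ew in h1 h2.
have wQ : w < Q by rewrite ew eQ; apply: digB.
have [u xe] : exists u, x = u + w*Q by exists (x - w*Q); clear -h1; lia.
have wu : w < u by clear -h1 xe; lia.
have uQ : u < Q by clear -h2 xe; lia.
have xn : x < Q*Q-1 by rewrite xe lt_top //; clear -wu uQ; lia.
have [u0 [u1 [ue [u0q u1q]]]] : exists u0 u1, u = u0 + u1*q /\ u0 < q /\ u1 < q.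
  exists (u %% q), (u %/ q); split; first by rewrite addnC -divn_eq.
  split; first by rewrite ltn_mod; clear -q1; lia.
  by rewrite ltn_divLR; [rewrite -eQ | clear -q1; lia].
have wu' : (b < u1) || (b == u1) && (a < u0) by rewrite -(lexB q a b u0 u1) // -ue -ew.
have [r er] : exists r, r = b + u0*q + (u1 + a*q)*Q by eexists.
have qx : q * x = b * (Q*Q-1) + r.
  have e : q * x + b = b*Q*Q + r by apply: (@qx_id q Q a b u0 u1 x r eQ _ er); rewrite xe ue ew.
  rewrite mulnBr muln1 mulnA.
  have : b <= b * Q * Q by rewrite -mulnA; apply: leq_pmulr; clear -Q0; nia.
  clear -e; move: (b*Q*Q) (q*x) e => P1 P2; lia.
have R0 : b + u0*q < Q by rewrite eQ; apply: digB.
have R1 : u1 + a*q < Q by rewrite eQ; apply: digB.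
have rn : r < Q*Q - 1.
  rewrite er lt_top // eQ !lt_top //.
  clear -aq bq u0q u1q wu' q1; lia.
have r0 : 0 < r.
  have : 0 < u0 + u1 by clear -wu'; lia.
  rewrite er; clear -q1 Q1; nia.
rewrite qx modnMDl (modn_small rn).
have [u' eu'] : exists u', u' = (q-1-b) + (q-1-u0)*q by eexists.
have [v' ev'] : exists v', v' = (q-1-u1) + (q-1-a)*q by eexists.
have u'Q : u' < Q by rewrite eu' eQ; apply: digB; clear -q1; lia.
have v'Q : v' < Q by rewrite ev' eQ; apply: digB; clear -q1; lia.
have re : Q*Q-1-r = u' + v'*Q.
  suff : u' + v'*Q + r = Q*Q-1 by clear; lia.
  rewrite eu' ev' er (@re_id q Q a b u0 u1 eQ) !subnK; try (clear -q1 aq bq u0q u1q; lia).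
  rewrite (topE q); last lia.
  rewrite -eQ topE //.
have rn' : Q*Q-1-r < Q*Q-1 by clear -r0 rn; lia.
have s1 : u' + v'*Q < Q*Q-1 by rewrite -re.
have s2 : u + w*Q < Q*Q-1 by rewrite -xe.
rewrite !(modn_small rn') re swapUV //.
rewrite (modn_small xn) xe swapUV //.
have L1 := lexB Q u' v' u w u'Q uQ.
have L2 := lexB Q v' u' u w v'Q uQ.
have L3 := lexB Q u w w u uQ wQ.
have L4 : (v' < w) = ((q-1-a) < b) || ((q-1-a)==b) && (q-1-u1 < a).
  rewrite ev' ew (lexB q (q-1-u1) (q-1-a) a b) //; clear -q1; lia.
have L5 : (u' < w) = ((q-1-u0) < b) || ((q-1-u0)==b) && (q-1-b < a).
  rewrite eu' ew (lexB q (q-1-b) (q-1-u0) a b) //; clear -q1; lia.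
have hv : (v' < w) || (u' < w).
  rewrite L4 L5; apply: fin_arith => //.
have h34 : u + w*Q < w + u*Q by rewrite L3 wu.
rewrite (minn_idPl (ltnW h34)).
case/orP: hv => h.
- by apply: leq_ltn_trans (geq_minl _ _) _; rewrite L1 h.
- by apply: leq_ltn_trans (geq_minr _ _) _; rewrite L2 h.
Qed.

Lemma core2 Q w u v : 1 < Q -> u < Q -> v < Q -> w.+1 < Q ->
  u + v*Q < w.+1 + w.+1*Q ->
  (w + w*Q < u+v*Q) && (u+v*Q < v+u*Q)
  = (w*Q + w < u+v*Q < w*Q+Q).
Proof.
move=> Q1 uQ vQ wQ hx.
have wQ' : w < Q by lia.
have A := lexB Q w w u v wQ' uQ.
move: hx; rewrite lexB // => hx.
have B : (u + v*Q < w*Q + Q) = (v <= w).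
  rewrite (_ : w*Q+Q = 0 + w.+1*Q); last lia.
  rewrite lexB //; last lia. lia.
have C : (u+v*Q < v+u*Q) = (v < u) by rewrite lexB //; lia.
rewrite C [w*Q + w]addnC A B. lia.
Qed.

Lemma I2char q b x : 1 < q -> b.+1 < q ->
  interlude2 q b x =
  ((q - 1 + b*q) * q^2 + (q - 1 + b*q) < x) && (x < (q - 1 + b*q) * q^2 + q^2).
Proof.
move=> q1 bq.
rewrite /interlude2 nqE.
have Q1 : 1 < q^2 by rewrite expnS expn1; nia.
set Q := q^2.
have e1 : qad q (q-1) b (q-1) b = (q-1 + b*q) + (q-1+b*q) * Q.
  rewrite /qad /Q !expnS expn0 !muln1; nia.
have e2 : qad q 0 b.+1 0 b.+1 = (q-1 + b*q).+1 + (q-1+b*q).+1 * Q.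
  rewrite /qad /Q !expnS expn0 !muln1; nia.
rewrite e1 e2.
set w := q - 1 + b*q.
have wQ : w.+1 < Q by rewrite /w /Q expnS expn1; nia.
case: (boolP (x < w.+1 + w.+1 * Q)) => xlt; last first.
  rewrite andbF /=; apply/esym/negbTE; nia.
have xn : x < Q*Q - 1 by nia.
have [ux [uQ [vQ ->]]] := halfchar Q w x Q1 wQ xn.
move: (x %% Q) (x %/ Q) ux uQ vQ xlt => u v -> uQ vQ xlt.
rewrite andTb.
by apply: core2.
Qed.

Lemma count_int lo hi N :
  count (fun x => (lo < x) && (x < hi)) (iota 0 N) = minn N hi - minn N lo.+1.
Proof.
elim: N => [|N IH]; first by rewrite /= !min0n.
rewrite -[N.+1]addn1 iotaD count_cat IH /= add0n.
lia.
Qed.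

Lemma pp_gt1 q : prime_power q -> 1 < q.
Proof.
case=> p [k [pp [k0 ->]]].
have p1 := prime_gt1 pp.
case: k k0 => // k _; rewrite expnS.
have : 0 < p ^ k by rewrite expn_gt0; lia.
nia.
Qed.

Theorem mainTheorem16 (q : nat) :
  prime_power q ->
  (forall a2 a3 : nat, a2 < q - 1 -> a3 < q -> q - 1 <= a2 + a3 ->
     ((count (fun x => interlude1 q a2 a3 x && SR_asym q x)
         (iota 0 (qad q a2.+1 a3 a2.+1 a3)))%:Z
      = (q ^ 2)%:Z - (q * a3)%:Z - a2%:Z - 1)%R
     /\ (forall x : nat, interlude1 q a2 a3 x -> SR_asym q x))
  /\
  (forall a3 : nat, a3 <= q - 2 ->
     ((count (fun x => interlude2 q a3 x && SR_asym q x)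
         (iota 0 (qad q 0 a3.+1 0 a3.+1)))%:Z
      = (q ^ 2)%:Z - (q * a3)%:Z - (q - 1)%:Z - 1)%R
     /\ (forall x : nat, interlude2 q a3 x -> SR_asym q x)).
Proof.
move=> /pp_gt1 q1.
have Qe : q^2 = q*q by rewrite expnS expn1.
split.
- move=> a b aq bq ab.
  have aq' : a.+1 < q by lia.
  have SRx : forall x, interlude1 q a b x -> SR_asym q x.
    move=> x; rewrite I1char // => /andP [h1 h2].
    apply: (@SRlem q a b x) => //; lia.
  split=> //.
  rewrite (eq_count (a2 := fun x => ((a + b*q) * q^2 + (a + b*q) < x) && (x < (a + b*q) * q^2 + q^2))); last first.
    move=> x /=; case h: (interlude1 q a b x).
    + by rewrite SRx // -I1char.
    + by rewrite -I1char // h.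
  rewrite count_int.
  have -> : qad q a.+1 b a.+1 b = (a + b*q).+1 + (a+b*q).+1 * q^2.
    rewrite /qad Qe !expnS expn0 !muln1; nia.
  rewrite Qe.
  have h1 : a + b*q < q*q by nia.
  have -> : minn ((a + b * q).+1 + (a + b * q).+1 * (q * q)) ((a + b * q) * (q * q) + q * q) = (a + b * q) * (q * q) + q * q.
    apply/minn_idPr; nia.
  have -> : minn ((a + b * q).+1 + (a + b * q).+1 * (q * q)) ((a + b * q) * (q * q) + (a + b * q)).+1 = ((a + b * q) * (q * q) + (a + b * q)).+1.
    apply/minn_idPr; nia.
  rewrite [q * b]mulnC.
  move: h1; move: (q * q) (b*q) => Y Z h1.
  move: ((a + Z) * Y) => P. lia.
- move=> b bq.
  have bq' : b.+1 < q by lia.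
  have SRx : forall x, interlude2 q b x -> SR_asym q x.
    move=> x; rewrite I2char // => /andP [h1 h2].
    apply: (@SRlem q (q-1) b x) => //; lia.
  split=> //.
  rewrite (eq_count (a2 := fun x => ((q - 1 + b*q) * q^2 + (q - 1 + b*q) < x) && (x < (q - 1 + b*q) * q^2 + q^2))); last first.
    move=> x /=; case h: (interlude2 q b x).
    + by rewrite SRx // -I2char.
    + by rewrite -I2char // h.
  rewrite count_int.
  have -> : qad q 0 b.+1 0 b.+1 = (q - 1 + b*q).+1 + (q - 1 + b*q).+1 * q^2.
    rewrite /qad Qe !expnS expn0 !muln1; nia.
  rewrite Qe.
  have h1 : q - 1 + b*q < q*q by nia.
  have -> : minn ((q - 1 + b * q).+1 + (q - 1 + b * q).+1 * (q * q)) ((q - 1 + b * q) * (q * q) + q * q) = (q - 1 + b * q) * (q * q) + q * q.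
    apply/minn_idPr; nia.
  have -> : minn ((q - 1 + b * q).+1 + (q - 1 + b * q).+1 * (q * q)) ((q - 1 + b * q) * (q * q) + (q - 1 + b * q)).+1 = ((q - 1 + b * q) * (q * q) + (q - 1 + b * q)).+1.
    apply/minn_idPr; nia.
  rewrite [q * b]mulnC.
  move: h1; move: (q * q) (b*q) (q - 1) => Y Z A h1.
  move: ((A + Z) * Y) => P. lia.
Qed.
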